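(* Let $s>1/2$ and $0\le\varepsilon<1$, and fix a constant $c_0>0$. For a real-valued mean-zero function $\phi$ on $\mathbb{T}$ (possibly depending on $t$) define the multilinear expressions \[ \widehat{B_1}(\phi)(n)=\sum_{\substack{n=n_1+n_2\\ n_1,n_2\neq n}}\frac{n(n_1^2+n_2^2)}{\Phi_2(n_1,n_2)}\widehat\phi(n_1)\widehat\phi(n_2), \] \[ \widehat{B_2}(\phi)(n)=\sum_{\substack{n=n_1+n_2+n_3\\ |\Phi_3(n_1,n_2,n_3)|\ge c_0\max_i|n_i|^4\\ n_1,n_2,n_3\neq n}}\frac{n(n_1^2+(n_2+n_3)^2)(n_2+n_3)(n_2^2+n_3^2)}{\Phi_2(n_1,n_2+n_3)\,\Phi_3(n_1,n_2,n_3)}\widehat\phi(n_1)\widehat\phi(n_2)\widehat\phi(n_3), \] where all frequencies $n,n_j$ range over $\mathbb{Z}\setminus\{0\}$ (and terms with $n_2+n_3=0$ in $B_2$ are omitted). Then for every such $\tilde u$, \[ \|B_1(\tilde u)+B_2(\tilde u)\|_{C^0_tH^{s+\varepsilon}_x}\lesssim\|\tilde u\|_{C^0_tH^s_x}^2+\|\tilde u\|_{C^0_tH^s_x}^3. \]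
   Context: $\Phi_2(n_1,n_2)=(n_1+n_2)^5-n_1^5-n_2^5$ and $\Phi_3(n_1,n_2,n_3)=(n_1+n_2+n_3)^5-n_1^5-n_2^5-n_3^5$. Factors of $2\pi$ are ignored. The implicit constant may depend on $s,\varepsilon,c_0$. *)

(* Defs.v *)
From Stdlib Require Import Reals ZArith List Bool.
Open Scope bool_scope.
From Coquelicot Require Import Coquelicot.
Import ListNotations.
Open Scope R_scope.

(** Fourier coefficient sequences on the torus (factors of 2*pi ignored). *)
Definition coeffs := Z -> C.

Definition real_meanzero (a : coeffs) : Prop :=
  a 0%Z = RtoC 0 /\ forall n : Z, a (- n)%Z = Cconj (a n).

Definition Phi2 (n1 n2 : Z) : Z := ((n1 + n2) ^ 5 - n1 ^ 5 - n2 ^ 5)%Z.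
Definition Phi3 (n1 n2 n3 : Z) : Z :=
  ((n1 + n2 + n3) ^ 5 - n1 ^ 5 - n2 ^ 5 - n3 ^ 5)%Z.

Definition zrange (N : nat) : list Z :=
  map (fun k => (Z.of_nat k - Z.of_nat N)%Z) (seq 0 (2 * N + 1)).

Definition zsumC (N : nat) (f : Z -> C) : C :=
  fold_right Cplus (RtoC 0) (map f (zrange N)).
Definition zsumR (N : nat) (f : Z -> R) : R :=
  fold_right Rplus 0 (map f (zrange N)).

Definition limC (S : nat -> C) : C :=
  (real (Lim_seq (fun N => fst (S N))), real (Lim_seq (fun N => snd (S N)))).

Definition Hs_sq (s : R) (a : coeffs) : Rbar :=
  Lim_seq (fun N => zsumR N (fun n => Rpower (1 + IZR n ^ 2) s * (Cmod (a n)) ^ 2)).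

Definition Zneqb (a b : Z) : bool := negb (Z.eqb a b).

Definition B1_term (a : coeffs) (n n1 : Z) : C :=
  let n2 := (n - n1)%Z in
  if Zneqb n1 0 && Zneqb n2 0 && Zneqb n1 n && Zneqb n2 n then
    RtoC (IZR (n * (n1 ^ 2 + n2 ^ 2)) / IZR (Phi2 n1 n2)) * a n1 * a n2
  else RtoC 0.

Definition B1hat (a : coeffs) : coeffs := fun n =>
  if Z.eqb n 0 then RtoC 0 else limC (fun N => zsumC N (B1_term a n)).

Definition B2_term (c0 : R) (a : coeffs) (n n1 n2 : Z) : C :=
  let n3 := (n - n1 - n2)%Z in
  let m := (n2 + n3)%Z in
  if Zneqb n1 0 && Zneqb n2 0 && Zneqb n3 0
     && Zneqb n1 n && Zneqb n2 n && Zneqb n3 n && Zneqb m 0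
     && (if Rle_dec (c0 * IZR (Z.max (Z.abs n1) (Z.max (Z.abs n2) (Z.abs n3))) ^ 4)
                 (IZR (Z.abs (Phi3 n1 n2 n3))) then true else false)
  then
    RtoC (IZR (n * (n1 ^ 2 + m ^ 2) * m * (n2 ^ 2 + n3 ^ 2))
          / (IZR (Phi2 n1 m) * IZR (Phi3 n1 n2 n3)))
      * a n1 * a n2 * a n3
  else RtoC 0.

Definition B2hat (c0 : R) (a : coeffs) : coeffs := fun n =>
  if Z.eqb n 0 then RtoC 0
  else limC (fun N => zsumC N (fun n1 => zsumC N (fun n2 => B2_term c0 a n n1 n2))).

Definition continuous_Hs (s : R) (I : R -> Prop) (u : R -> coeffs) : Prop :=
  forall t, I t -> forall eps, 0 < eps -> exists delta, 0 < delta /\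
    forall t', I t' -> Rabs (t' - t) < delta ->
      Rbar_lt (Hs_sq s (fun n => u t' n - u t n)%C) (Finite (eps ^ 2)).

(* Main.v *)
Require Import Defs.
From Stdlib Require Import Reals ZArith List Lia Lra Psatz Bool.
From Coquelicot Require Import Coquelicot.
Import ListNotations.
Open Scope R_scope.

Definition lsum {X : Type} (l : list X) (f : X -> R) : R :=
  fold_right Rplus 0 (map f l).

Lemma lsum_nil {X} (f : X -> R) : lsum [] f = 0.
Proof. reflexivity. Qed.
Lemma lsum_cons {X} x l (f : X -> R) : lsum (x :: l) f = f x + lsum l f.
Proof. reflexivity. Qed.
Lemma lsum_app {X} l1 l2 (f : X -> R) : lsum (l1 ++ l2) f = lsum l1 f + lsum l2 f.
Proof. induction l1 as [|a l1 IH]. - simpl. rewrite lsum_nil. lra. - simpl. rewrite !lsum_cons, IH. lra. Qed.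
Lemma lsum_map {X Y} (g : X -> Y) l (f : Y -> R) : lsum (map g l) f = lsum l (fun x => f (g x)).
Proof. unfold lsum. rewrite map_map. reflexivity. Qed.
Lemma lsum_le {X} l (f g : X -> R) : (forall x, In x l -> f x <= g x) -> lsum l f <= lsum l g.
Proof. induction l; intros H; rewrite ?lsum_nil, ?lsum_cons. lra.
  pose proof (H a (or_introl eq_refl)). pose proof (IHl (fun x h => H x (or_intror h))). lra. Qed.
Lemma lsum_nonneg {X} l (f : X -> R) : (forall x, In x l -> 0 <= f x) -> 0 <= lsum l f.
Proof. intros H. pose proof (lsum_le l (fun _ => 0) f H). 
  assert (lsum l (fun _ => 0) = 0) as E.
  { clear. induction l. reflexivity. rewrite lsum_cons, IHl. lra. }
  lra. Qed.
Lemma lsum_plus {X} l (f g : X -> R) : lsum l (fun x => f x + g x) = lsum l f + lsum l g.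
Proof. induction l; rewrite ?lsum_nil, ?lsum_cons. lra. rewrite IHl. lra. Qed.
Lemma lsum_scal {X} l c (f : X -> R) : lsum l (fun x => c * f x) = c * lsum l f.
Proof. induction l; rewrite ?lsum_nil, ?lsum_cons. lra. rewrite IHl. lra. Qed.
Lemma lsum_ext {X} l (f g : X -> R) : (forall x, In x l -> f x = g x) -> lsum l f = lsum l g.
Proof. intros H. apply Rle_antisym; apply lsum_le; intros x Hx; rewrite (H x Hx); lra. Qed.
Lemma lsum_comm {X Y} (l1 : list X) (l2 : list Y) (h : X -> Y -> R) :
  lsum l1 (fun x => lsum l2 (fun y => h x y)) = lsum l2 (fun y => lsum l1 (fun x => h x y)).
Proof. induction l1.
  - rewrite lsum_nil. induction l2. reflexivity. rewrite lsum_cons, <- IHl2. rewrite lsum_nil. lra.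
  - rewrite lsum_cons, IHl1, <- lsum_plus. apply lsum_ext. intros. rewrite lsum_cons. reflexivity. Qed.
Lemma lsum_prod {X Y} (l1 : list X) (l2 : list Y) (h : X * Y -> R) :
  lsum (list_prod l1 l2) h = lsum l1 (fun x => lsum l2 (fun y => h (x, y))).
Proof. induction l1. reflexivity. simpl. rewrite lsum_app, lsum_cons, IHl1, lsum_map. reflexivity. Qed.
Lemma lsum_In {X} l (f : X -> R) x : (forall y, In y l -> 0 <= f y) -> In x l -> f x <= lsum l f.
Proof. induction l; simpl; intros H Hx. contradiction. rewrite lsum_cons.
  destruct Hx as [<-|Hx].
  - pose proof (lsum_nonneg l f (fun y h => H y (or_intror h))). lra.
  - pose proof (IHl (fun y h => H y (or_intror h)) Hx). pose proof (H a (or_introl eq_refl)). lra. Qed.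

Lemma lsum_CS {X} l (f g : X -> R) :
  (lsum l (fun x => f x * g x))^2 <= lsum l (fun x => f x ^ 2) * lsum l (fun x => g x ^ 2).
Proof. induction l; rewrite ?lsum_nil, ?lsum_cons. lra.
  set (Sx := lsum l (fun x => f x * g x)) in *.
  set (A := lsum l (fun x => f x ^ 2)) in *.
  set (B := lsum l (fun x => g x ^ 2)) in *.
  assert (0 <= A) by (apply lsum_nonneg; intros; apply pow2_ge_0).
  assert (0 <= B) by (apply lsum_nonneg; intros; apply pow2_ge_0).
  set (u := f a) in *. set (v := g a) in *.
  pose proof (pow2_ge_0 u). pose proof (pow2_ge_0 v).
  assert (Hk : (2 * Sx * u * v) ^ 2 <= (A * v^2 + B * u^2)^2).
  { assert (4 * A * B * u^2 * v^2 <= (A * v^2 + B * u^2)^2).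
    { pose proof (pow2_ge_0 (A * v^2 - B * u^2)). nra. }
    assert ((2 * Sx * u * v) ^ 2 = 4 * Sx^2 * (u^2 * v^2)) by ring.
    assert (0 <= u^2 * v^2) by nra.
    assert (4 * Sx^2 * (u^2 * v^2) <= 4 * (A * B) * (u^2 * v^2)) by (apply Rmult_le_compat_r; [auto|lra]).
    nra. }
  assert (0 <= A * v^2 + B * u^2) by nra.
  assert (2 * Sx * u * v <= A * v^2 + B * u^2) by nra.
  replace ((u * v + Sx) ^ 2) with (Sx^2 + 2 * Sx * u * v + u^2 * v^2) by ring.
  replace ((u ^ 2 + A) * (v ^ 2 + B)) with (A * B + (A * v^2 + B * u^2) + u^2 * v^2) by ring.
  lra. Qed.

Lemma lsum_CSw {X} l (f w : X -> R) : (forall x, In x l -> 0 <= w x) ->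
  (lsum l (fun x => f x * w x))^2 <= lsum l (fun x => f x ^ 2 * w x) * lsum l w.
Proof. intros Hw.
  pose proof (lsum_CS l (fun x => f x * sqrt (w x)) (fun x => sqrt (w x))) as H.
  cbv beta in H.
  rewrite (lsum_ext l (fun x => f x * sqrt (w x) * sqrt (w x)) (fun x => f x * w x)) in H.
  2:{ intros x Hx. rewrite Rmult_assoc, sqrt_sqrt; auto. }
  rewrite (lsum_ext l (fun x => (f x * sqrt (w x))^2) (fun x => f x ^2 * w x)) in H.
  2:{ intros x Hx. rewrite Rpow_mult_distr, <- Rsqr_pow2 with (x := sqrt (w x)), Rsqr_sqrt; auto. }
  rewrite (lsum_ext l (fun x => (sqrt (w x))^2) w) in H.
  2:{ intros x Hx. rewrite <- Rsqr_pow2, Rsqr_sqrt; auto. }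
  exact H. Qed.

Lemma lsum_remove_le l (f : Z -> R) x : (forall y, In y l -> 0 <= f y) ->
  lsum (remove Z.eq_dec x l) f <= lsum l f.
Proof. induction l as [|a l IH]; intros H; simpl. lra.
  pose proof (IH (fun y h => H y (or_intror h))). pose proof (H a (or_introl eq_refl)).
  destruct (Z.eq_dec x a); rewrite ?lsum_cons; lra. Qed.

Lemma lsum_remove_In l (f : Z -> R) x : (forall y, In y l -> 0 <= f y) -> In x l ->
  f x + lsum (remove Z.eq_dec x l) f <= lsum l f.
Proof. induction l as [|a l IH]; intros H Hx; simpl. contradiction.
  pose proof (H a (or_introl eq_refl)).
  destruct (Z.eq_dec x a) as [->|ne]; rewrite ?lsum_cons.
  - pose proof (lsum_remove_le l f a (fun y h => H y (or_intror h))). lra.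
  - destruct Hx as [->|Hx]. congruence.
    pose proof (IH (fun y h => H y (or_intror h)) Hx). lra. Qed.

Lemma lsum_incl l l' (f : Z -> R) : NoDup l -> incl l l' -> (forall y, In y l' -> 0 <= f y) ->
  lsum l f <= lsum l' f.
Proof. revert l'. induction l as [|a l IH]; intros l' Hn Hi H.
  - rewrite lsum_nil. apply lsum_nonneg; auto.
  - inversion Hn; subst. rewrite lsum_cons.
    assert (Ha : In a l') by (apply Hi; now left).
    pose proof (lsum_remove_In l' f a H Ha).
    assert (lsum l f <= lsum (remove Z.eq_dec a l') f).
    { apply IH; auto.
      - intros y Hy. apply in_in_remove. intros ->; contradiction. apply Hi; now right.
      - intros y Hy. apply H. eapply in_remove; eauto. }
    lra. Qed.

Lemma zsumR_lsum N f : zsumR N f = lsum (zrange N) f.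
Proof. reflexivity. Qed.

Lemma zrange_In N k : In k (zrange N) <-> (Z.abs k <= Z.of_nat N)%Z.
Proof. unfold zrange. rewrite in_map_iff. split.
  - intros [j [<- Hj]]. apply in_seq in Hj. lia.
  - intros H. exists (Z.to_nat (k + Z.of_nat N)). split. lia. apply in_seq. lia. Qed.

Lemma NoDup_map_inj {X Y} (g : X -> Y) l : (forall x y, g x = g y -> x = y) -> NoDup l -> NoDup (map g l).
Proof. intros Hg Hn. induction Hn; simpl; constructor; auto.
  rewrite in_map_iff. intros [y [Hy Hy']]. apply Hg in Hy. subst. contradiction. Qed.

Lemma zrange_NoDup N : NoDup (zrange N).
Proof. unfold zrange. apply NoDup_map_inj. intros; lia. apply seq_NoDup. Qed.

Lemma lsum_nodup_bound l (f : Z -> R) B : (forall k, 0 <= f k) -> (forall N, zsumR N f <= B) ->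
  NoDup l -> lsum l f <= B.
Proof. intros Hf HB Hn.
  assert (exists N, forall k, In k l -> (Z.abs k <= Z.of_nat N)%Z) as [N HN].
  { clear. induction l as [|a l [N HN]]. exists O. intros k []. 
    exists (Nat.max N (Z.to_nat (Z.abs a))). intros k [<-|Hk]. lia. specialize (HN k Hk). lia. }
  eapply Rle_trans. apply (lsum_incl l (zrange N)); auto.
  intros k Hk. apply zrange_In. auto. apply HB. Qed.

Lemma zsumR_S N f : zsumR (S N) f = f (- Z.of_nat (S N))%Z + zsumR N f + f (Z.of_nat (S N)).
Proof. unfold zsumR. fold (lsum (zrange (S N)) f). fold (lsum (zrange N) f).
  unfold zrange. replace (2 * S N + 1)%nat with (S (S (2 * N + 1))) by lia.
  rewrite seq_S. simpl seq. rewrite <- seq_shift. rewrite map_app, map_cons, !lsum_app, !lsum_cons, !lsum_map.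
  rewrite lsum_cons, lsum_nil.
  replace (Z.of_nat 0 - Z.of_nat (S N))%Z with (- Z.of_nat (S N))%Z by lia.
  replace (Z.of_nat (0 + S (2 * N + 1)) - Z.of_nat (S N))%Z with (Z.of_nat (S N)) by lia.
  rewrite (lsum_ext _ (fun x => f (Z.of_nat (S x) - Z.of_nat (S N))%Z) (fun x => f (Z.of_nat x - Z.of_nat N)%Z)).
  lra. intros. f_equal. lia. Qed.

Lemma zsumR_mono N f : (forall k, 0 <= f k) -> zsumR N f <= zsumR (S N) f.
Proof. intros H. rewrite zsumR_S. pose proof (H (- Z.of_nat (S N))%Z). pose proof (H (Z.of_nat (S N))). lra. Qed.

Lemma lim_abs_bound (u : nat -> R) X : (forall L, Rabs (u L) <= X) -> Rabs (real (Lim_seq u)) <= X.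
Proof. intros H.
  assert (H1 : Rbar_le (Lim_seq u) (Lim_seq (fun _ => X))).
  { apply Lim_seq_le_loc. exists O. intros L _. specialize (H L). apply Rabs_le_between in H. lra. }
  assert (H2 : Rbar_le (Lim_seq (fun _ => -X)) (Lim_seq u)).
  { apply Lim_seq_le_loc. exists O. intros L _. specialize (H L). apply Rabs_le_between in H. lra. }
  rewrite Lim_seq_const in H1, H2.
  destruct (Lim_seq u) as [r| |]; simpl in *; try contradiction.
  apply Rabs_le_between. lra. Qed.

Lemma Cmod_sq (z : C) : Cmod z ^ 2 = fst z ^ 2 + snd z ^ 2.
Proof. unfold Cmod. rewrite pow2_sqrt. reflexivity.
  pose proof (pow2_ge_0 (fst z)); pose proof (pow2_ge_0 (snd z)). lra. Qed.

Lemma limC_bound (Sq : nat -> C) X : (forall L, Cmod (Sq L) <= X) -> Cmod (limC Sq) ^ 2 <= 2 * X ^ 2.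
Proof. intros H. rewrite Cmod_sq. unfold limC; cbn [fst snd].
  assert (A : Rabs (real (Lim_seq (fun N => fst (Sq N)))) <= X).
  { apply lim_abs_bound. intros L. eapply Rle_trans. 2: apply (H L).
    rewrite <- (Rabs_pos_eq (Cmod _)) by apply Cmod_ge_0.
    apply Rsqr_le_abs_0. unfold Rsqr. pose proof (Cmod_sq (Sq L)). pose proof (pow2_ge_0 (snd (Sq L))). nra. }
  assert (B : Rabs (real (Lim_seq (fun N => snd (Sq N)))) <= X).
  { apply lim_abs_bound. intros L. eapply Rle_trans. 2: apply (H L).
    rewrite <- (Rabs_pos_eq (Cmod _)) by apply Cmod_ge_0.
    apply Rsqr_le_abs_0. unfold Rsqr. pose proof (Cmod_sq (Sq L)). pose proof (pow2_ge_0 (fst (Sq L))). nra. }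
  set (a := real _) in A. set (b := real _) in B.
  assert (a^2 <= X^2). { rewrite <- (pow2_abs a). pose proof (Rabs_pos a). nra. }
  assert (b^2 <= X^2). { rewrite <- (pow2_abs b). pose proof (Rabs_pos b). nra. }
  unfold a, b in *. lra. Qed.

Lemma Hs_term_nonneg s a n : 0 <= Rpower (1 + IZR n ^ 2) s * Cmod (a n) ^ 2.
Proof. apply Rmult_le_pos. unfold Rpower. left; apply exp_pos. apply pow2_ge_0. Qed.

Lemma Hs_partial s a Y : Rbar_le (Hs_sq s a) (Finite Y) ->
  forall N, zsumR N (fun n => Rpower (1 + IZR n ^ 2) s * Cmod (a n) ^ 2) <= Y.
Proof. intros H N. unfold Hs_sq in H.
  set (u := fun N => zsumR N _) in *.
  assert (Rbar_le (Lim_seq (fun _ => u N)) (Lim_seq u)).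
  { apply Lim_seq_le_loc. exists N. intros m Hm. induction Hm. lra.
    eapply Rle_trans. apply IHHm. apply zsumR_mono. intros; apply Hs_term_nonneg. }
  rewrite Lim_seq_const in H0.
  pose proof (Rbar_le_trans _ _ _ H0 H). exact H1. Qed.

Lemma Hs_goal s b Y : (forall N, zsumR N (fun n => Rpower (1 + IZR n ^ 2) s * Cmod (b n) ^ 2) <= Y) ->
  Rbar_le (Hs_sq s b) (Finite Y).
Proof. intros H. unfold Hs_sq. rewrite <- (Lim_seq_const Y). apply Lim_seq_le_loc. exists O. intros; apply H. Qed.

Lemma lim_lsum (l : list Z) (c : Z -> R) (T : Z -> nat -> R) (X : Z -> R) :
  (forall n, In n l -> is_lim_seq (T n) (X n)) ->
  is_lim_seq (fun L => lsum l (fun n => c n * T n L ^ 2)) (lsum l (fun n => c n * X n ^ 2)).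
Proof. induction l as [|a l IH]; intros H.
  - rewrite lsum_nil. apply is_lim_seq_ext with (fun _ => 0). intros; reflexivity. apply is_lim_seq_const.
  - rewrite lsum_cons. apply is_lim_seq_ext with (fun L => c a * T a L ^ 2 + lsum l (fun n => c n * T n L ^ 2)).
    intros; rewrite lsum_cons; reflexivity.
    apply is_lim_seq_plus'. 2: apply IH; intros; apply H; now right.
    apply (is_lim_seq_mult' (fun _ => c a) (fun L => T a L ^ 2)). apply is_lim_seq_const.
    apply is_lim_seq_ext with (fun L => T a L * (T a L * 1)). intros; simpl; reflexivity.
    replace (X a ^ 2) with (X a * (X a * 1)) by (simpl; reflexivity).
    apply is_lim_seq_mult'. apply H; now left.
    apply (is_lim_seq_mult' _ (fun _ => 1)). apply H; now left. apply is_lim_seq_const. Qed.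

Lemma lim_pass (l : list Z) (c : Z -> R) (T : Z -> nat -> R) K0 :
  (forall n, In n l -> 1 <= c n) ->
  (forall n L, 0 <= T n L) -> (forall n L, T n L <= T n (S L)) ->
  (forall L, lsum l (fun n => c n * T n L ^ 2) <= K0) ->
  exists X : Z -> R, (forall n L, In n l -> T n L <= X n) /\ lsum l (fun n => c n * X n ^ 2) <= K0.
Proof. intros Hc HT Hm HK.
  assert (Hb : forall n L, In n l -> T n L <= K0 + 1).
  { intros n L Hn. specialize (HK L).
    pose proof (lsum_In l (fun n => c n * T n L ^ 2) n) as Hi.
    assert (0 <= T n L ^ 2) by apply pow2_ge_0.
    assert (c n * T n L ^ 2 <= K0).
    { eapply Rle_trans. apply Hi; auto. intros y Hy. specialize (Hc y Hy). pose proof (pow2_ge_0 (T y L)). nra. lra. }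
    specialize (Hc n Hn). specialize (HT n L).
    assert (T n L ^ 2 <= K0) by nra.
    destruct (Rle_dec (T n L) 1). lra. simpl in *. nra. }
  assert (Hl : forall n, In n l -> is_lim_seq (T n) (real (Lim_seq (T n)))).
  { intros n Hn. destruct (ex_finite_lim_seq_incr (T n) (K0 + 1) (Hm n) (fun L => Hb n L Hn)) as [x Hx].
    rewrite (is_lim_seq_unique _ _ Hx). simpl. exact Hx. }
  exists (fun n => real (Lim_seq (T n))). split.
  - intros n L Hn. apply is_lim_seq_incr_compare. apply Hl; auto. apply Hm.
  - pose proof (lim_lsum l c T _ Hl).
    assert (Rbar_le (lsum l (fun n => c n * real (Lim_seq (T n)) ^ 2)) K0).
    { eapply is_lim_seq_le. 2: exact H. 2: apply is_lim_seq_const. intros; apply HK. }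
    exact H0. Qed.

Lemma cs_conv {X} (P : list X) (Nl : list Z) (Fn w : Z -> X -> R) B C :
  (forall n p, 0 <= w n p) -> (forall n, lsum P (w n) <= B) ->
  lsum Nl (fun n => lsum P (fun p => Fn n p ^ 2 * w n p)) <= C ->
  lsum Nl (fun n => (lsum P (fun p => Fn n p * w n p)) ^ 2) <= B * C.
Proof. intros Hw HB HC.
  eapply Rle_trans with (lsum Nl (fun n => B * lsum P (fun p => Fn n p ^ 2 * w n p))).
  - apply lsum_le. intros n _. 
    pose proof (lsum_CSw P (Fn n) (w n) (fun p _ => Hw n p)).
    assert (0 <= lsum P (fun p => Fn n p ^ 2 * w n p)).
    { apply lsum_nonneg. intros. apply Rmult_le_pos. apply pow2_ge_0. apply Hw. }
    specialize (HB n). nra.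
  - rewrite lsum_scal.
    assert (0 <= B). { eapply Rle_trans. 2: apply (HB 0%Z). apply lsum_nonneg. intros; apply Hw. }
    apply Rmult_le_compat_l; auto. Qed.

Section Conv.
Variables (F G : Z -> R) (A B : R).
Hypothesis HF0 : forall k, 0 <= F k.
Hypothesis HG0 : forall k, 0 <= G k.
Hypothesis HF : forall l, NoDup l -> lsum l (fun k => F k ^ 2) <= A.
Hypothesis HG : forall l, NoDup l -> lsum l G <= B.

Lemma HGsh L (g : Z -> Z) : (forall x y, g x = g y -> x = y) -> lsum (zrange L) (fun k => G (g k)) <= B.
Proof. intros Hg. rewrite <- lsum_map. apply HG. apply NoDup_map_inj; auto. apply zrange_NoDup. Qed.
Lemma HFsh L (g : Z -> Z) : (forall x y, g x = g y -> x = y) -> lsum (zrange L) (fun k => F (g k) ^ 2) <= A.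
Proof. intros Hg. rewrite <- (lsum_map g _ (fun k => F k ^ 2)). apply HF. apply NoDup_map_inj; auto. apply zrange_NoDup. Qed.

Lemma B0 : 0 <= B.
Proof. eapply Rle_trans. 2: apply (HG []); constructor. rewrite lsum_nil; lra. Qed.
Lemma A0 : 0 <= A.
Proof. eapply Rle_trans. 2: apply (HF []); constructor. rewrite lsum_nil; lra. Qed.

Lemma bil1 N L : lsum (zrange N) (fun n => (lsum (zrange L) (fun n1 => F n1 * G (n - n1)%Z)) ^ 2) <= B * (A * B).
Proof. apply (cs_conv (zrange L) (zrange N) (fun n n1 => F n1) (fun n n1 => G (n - n1)%Z)).
  - intros; apply HG0.
  - intros n. apply HGsh. intros; lia.
  - rewrite lsum_comm.
    eapply Rle_trans with (lsum (zrange L) (fun n1 => F n1 ^ 2 * B)).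
    + apply lsum_le. intros n1 _. rewrite lsum_scal. apply Rmult_le_compat_l. apply pow2_ge_0.
      apply HGsh. intros; lia.
    + rewrite (lsum_ext _ _ (fun n1 => B * F n1 ^ 2)) by (intros; ring). rewrite lsum_scal.
      rewrite (Rmult_comm A B). apply Rmult_le_compat_l. apply B0. apply HF, zrange_NoDup. Qed.

Lemma bil2 N L : lsum (zrange N) (fun n => (lsum (zrange L) (fun n1 => F (n - n1)%Z * G n1)) ^ 2) <= B * (A * B).
Proof. apply (cs_conv (zrange L) (zrange N) (fun n n1 => F (n - n1)%Z) (fun n n1 => G n1)).
  - intros; apply HG0.
  - intros n. apply HG, zrange_NoDup.
  - rewrite lsum_comm.
    eapply Rle_trans with (lsum (zrange L) (fun n1 => G n1 * A)).
    + apply lsum_le. intros n1 _. rewrite (lsum_ext _ _ (fun n => G n1 * F (n - n1)%Z ^ 2)) by (intros; ring).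
      rewrite lsum_scal. apply Rmult_le_compat_l. apply HG0. apply HFsh. intros; lia.
    + rewrite (lsum_ext _ _ (fun n1 => A * G n1)) by (intros; ring). rewrite lsum_scal.
      apply Rmult_le_compat_l. apply A0. apply HG, zrange_NoDup. Qed.

Definition sq L := list_prod (zrange L) (zrange L).

Lemma lsum_le_mul {X} (l : list X) f g c : (forall x, 0 <= f x) -> (forall x, g x <= c) ->
  lsum l (fun x => f x * g x) <= c * lsum l f.
Proof. intros Hf Hg. rewrite <- lsum_scal. apply lsum_le. intros x _.
  specialize (Hf x); specialize (Hg x). nra. Qed.

Lemma lsum_G L : lsum (zrange L) G <= B.
Proof. apply HG, zrange_NoDup. Qed.
Lemma lsum_F L : lsum (zrange L) (fun k => F k ^ 2) <= A.
Proof. apply HF, zrange_NoDup. Qed.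
Lemma lsum_G0 {X} (l : list X) g : (forall x, 0 <= g x) -> 0 <= lsum l g.
Proof. intros; apply lsum_nonneg; auto. Qed.

Lemma tri1 N L : lsum (zrange N) (fun n => (lsum (sq L) (fun p => F (fst p) * (G (snd p) * G (n - fst p - snd p)%Z))) ^ 2) <= (B * B) * (B * (A * B)).
Proof. apply (cs_conv (sq L) (zrange N) (fun n p => F (fst p)) (fun n p => G (snd p) * G (n - fst p - snd p)%Z)).
  - intros; apply Rmult_le_pos; apply HG0.
  - intros n. unfold sq. rewrite lsum_prod. cbn [fst snd]. rewrite lsum_comm.
    eapply Rle_trans. apply lsum_le. intros y _. rewrite lsum_scal. apply Rle_refl.
    eapply Rle_trans. apply lsum_le_mul. apply HG0. intros y. apply HGsh. intros; lia.
    apply Rmult_le_compat_l. apply B0. apply lsum_G.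
  - rewrite lsum_comm. unfold sq. rewrite lsum_prod. cbn [fst snd].
    eapply Rle_trans. apply lsum_le. intros x _. apply lsum_le. intros y _.
    rewrite (lsum_ext _ _ (fun n => (F x ^ 2 * G y) * G (n - x - y)%Z)) by (intros; ring).
    rewrite lsum_scal. apply Rle_refl.
    eapply Rle_trans. apply lsum_le. intros x _. apply lsum_le_mul.
    intros; apply Rmult_le_pos. apply pow2_ge_0. apply HG0. intros y. apply HGsh. intros; lia.
    rewrite lsum_scal. apply Rmult_le_compat_l. apply B0.
    eapply Rle_trans. apply lsum_le. intros x _. rewrite lsum_scal. apply Rle_refl.
    eapply Rle_trans. apply lsum_le_mul. intros; apply pow2_ge_0. intros; apply lsum_G.
    rewrite (Rmult_comm A B). apply Rmult_le_compat_l. apply B0. apply lsum_F. Qed.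

Lemma tri2 N L : lsum (zrange N) (fun n => (lsum (sq L) (fun p => F (snd p) * (G (fst p) * G (n - fst p - snd p)%Z))) ^ 2) <= (B * B) * (B * (A * B)).
Proof. apply (cs_conv (sq L) (zrange N) (fun n p => F (snd p)) (fun n p => G (fst p) * G (n - fst p - snd p)%Z)).
  - intros; apply Rmult_le_pos; apply HG0.
  - intros n. unfold sq. rewrite lsum_prod. cbn [fst snd].
    eapply Rle_trans. apply lsum_le. intros y _. rewrite lsum_scal. apply Rle_refl.
    eapply Rle_trans. apply lsum_le_mul. apply HG0. intros y. apply HGsh. intros; lia.
    apply Rmult_le_compat_l. apply B0. apply lsum_G.
  - rewrite lsum_comm. unfold sq. rewrite lsum_prod. cbn [fst snd]. rewrite lsum_comm.
    eapply Rle_trans. apply lsum_le. intros x _. apply lsum_le. intros y _.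
    rewrite (lsum_ext _ _ (fun n => (F x ^ 2 * G y) * G (n - y - x)%Z)) by (intros; ring).
    rewrite lsum_scal. apply Rle_refl.
    eapply Rle_trans. apply lsum_le. intros x _. apply lsum_le_mul.
    intros; apply Rmult_le_pos. apply pow2_ge_0. apply HG0. intros y. apply HGsh. intros; lia.
    rewrite lsum_scal. apply Rmult_le_compat_l. apply B0.
    eapply Rle_trans. apply lsum_le. intros x _. rewrite lsum_scal. apply Rle_refl.
    eapply Rle_trans. apply lsum_le_mul. intros; apply pow2_ge_0. intros; apply lsum_G.
    rewrite (Rmult_comm A B). apply Rmult_le_compat_l. apply B0. apply lsum_F. Qed.

Lemma tri3 N L : lsum (zrange N) (fun n => (lsum (sq L) (fun p => F (n - fst p - snd p)%Z * (G (fst p) * G (snd p)))) ^ 2) <= (B * B) * (A * (B * B)).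
Proof. apply (cs_conv (sq L) (zrange N) (fun n p => F (n - fst p - snd p)%Z) (fun n p => G (fst p) * G (snd p))).
  - intros; apply Rmult_le_pos; apply HG0.
  - intros n. unfold sq. rewrite lsum_prod. cbn [fst snd].
    eapply Rle_trans. apply lsum_le. intros y _. rewrite lsum_scal. apply Rle_refl.
    eapply Rle_trans. apply lsum_le_mul. apply HG0. intros y. apply lsum_G.
    apply Rmult_le_compat_l. apply B0. apply lsum_G.
  - rewrite lsum_comm. unfold sq. rewrite lsum_prod. cbn [fst snd].
    eapply Rle_trans. apply lsum_le. intros x _. apply lsum_le. intros y _.
    rewrite (lsum_ext _ _ (fun n => (G x * G y) * F (n - x - y)%Z ^ 2)) by (intros; ring).
    rewrite lsum_scal. apply Rle_refl.
    eapply Rle_trans. apply lsum_le. intros x _. apply lsum_le_mul.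
    intros; apply Rmult_le_pos; apply HG0. intros y. apply HFsh. intros; lia.
    rewrite lsum_scal. apply Rmult_le_compat_l. apply A0.
    eapply Rle_trans. apply lsum_le. intros x _. rewrite lsum_scal. apply Rle_refl.
    eapply Rle_trans. apply lsum_le_mul. apply HG0. intros; apply lsum_G.
    apply Rmult_le_compat_l. apply B0. apply lsum_G. Qed.

End Conv.

Definition wt (r : R) (k : Z) : R := Rpower (1 + IZR k ^ 2) (r / 2).

Lemma base_ge1 k : 1 <= 1 + IZR k ^ 2.
Proof. pose proof (pow2_ge_0 (IZR k)). lra. Qed.

Lemma wt_pos r k : 0 < wt r k.
Proof. unfold wt, Rpower. apply exp_pos. Qed.

Lemma wt_ge1 r k : 0 <= r -> 1 <= wt r k.
Proof. intros. unfold wt. rewrite <- (Rpower_O (1 + IZR k ^ 2)) at 1.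
  apply Rle_Rpower. apply base_ge1. lra. pose proof (base_ge1 k); lra. Qed.

Lemma wt_sq r k : wt r k ^ 2 = Rpower (1 + IZR k ^ 2) r.
Proof. unfold wt. rewrite <- Rsqr_pow2. unfold Rsqr. rewrite <- Rpower_plus. f_equal. lra. Qed.

Lemma Rpower_9 x y e : 0 <= e -> 0 < x -> 0 < y -> x <= 9 * y -> Rpower x e <= Rpower 9 e * Rpower y e.
Proof. intros. rewrite Rpower_mult_distr by lra. apply Rle_Rpower_l; lra. Qed.

Lemma wt_sub2 r n1 n2 : 0 <= r -> wt r (n1 + n2) <= Rpower 9 (r/2) * (wt r n1 + wt r n2).
Proof. intros Hr. unfold wt. rewrite plus_IZR.
  set (x := IZR n1). set (y := IZR n2).
  assert (Hx : 0 <= x^2) by apply pow2_ge_0. assert (Hy : 0 <= y^2) by apply pow2_ge_0.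
  pose proof (pow2_ge_0 (x - y)).
  assert (Hb : 1 + (x + y)^2 <= 9 * Rmax (1 + x^2) (1 + y^2)).
  { apply Rmax_case_strong; intros; nra. }
  assert (0 < Rpower 9 (r/2)) by (unfold Rpower; apply exp_pos).
  assert (0 < Rmax (1 + x^2) (1 + y^2)) by (unfold Rmax; destruct Rle_dec; lra).
  assert (0 < 1 + (x+y)^2) by (pose proof (pow2_ge_0 (x+y)); lra).
  eapply Rle_trans. apply (Rpower_9 _ _ (r/2) ltac:(lra) H2 H1 Hb).
  apply Rmult_le_compat_l. lra.
  assert (0 < Rpower (1 + x^2) (r/2)) by (unfold Rpower; apply exp_pos).
  assert (0 < Rpower (1 + y^2) (r/2)) by (unfold Rpower; apply exp_pos).
  unfold Rmax; destruct Rle_dec; lra. Qed.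

Lemma wt_sub3 r n1 n2 n3 : 0 <= r -> wt r (n1 + n2 + n3) <= Rpower 9 (r/2) * (wt r n1 + wt r n2 + wt r n3).
Proof. intros Hr. unfold wt. rewrite !plus_IZR.
  set (x := IZR n1). set (y := IZR n2). set (z := IZR n3).
  assert (Hx : 0 <= x^2) by apply pow2_ge_0. assert (Hy : 0 <= y^2) by apply pow2_ge_0.
  assert (Hz : 0 <= z^2) by apply pow2_ge_0.
  pose proof (pow2_ge_0 (x - y)). pose proof (pow2_ge_0 (x - z)). pose proof (pow2_ge_0 (y - z)).
  assert (Hb : 1 + (x + y + z)^2 <= 9 * Rmax (1 + x^2) (Rmax (1 + y^2) (1 + z^2))).
  { repeat apply Rmax_case_strong; intros; nra. }
  assert (0 < Rpower 9 (r/2)) by (unfold Rpower; apply exp_pos).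
  assert (0 < Rmax (1 + x^2) (Rmax (1 + y^2) (1 + z^2))) by (unfold Rmax; repeat destruct Rle_dec; lra).
  assert (0 < 1 + (x+y+z)^2) by (pose proof (pow2_ge_0 (x+y+z)); lra).
  eapply Rle_trans. apply (Rpower_9 _ _ (r/2) ltac:(lra) H4 H3 Hb).
  apply Rmult_le_compat_l. lra.
  assert (0 < Rpower (1 + x^2) (r/2)) by (unfold Rpower; apply exp_pos).
  assert (0 < Rpower (1 + y^2) (r/2)) by (unfold Rpower; apply exp_pos).
  assert (0 < Rpower (1 + z^2) (r/2)) by (unfold Rpower; apply exp_pos).
  unfold Rmax; repeat destruct Rle_dec; lra. Qed.

Lemma wt_div r s k : 0 <= r <= s + 1 -> k <> 0%Z -> wt r k <= 2 * Rabs (IZR k) * wt s k.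
Proof. intros Hr Hk. unfold wt. set (b := 1 + IZR k ^ 2).
  assert (Hb : 1 <= b) by apply base_ge1.
  eapply Rle_trans. apply (Rle_Rpower b (r/2) ((s + 1)/2)); auto. lra.
  replace ((s+1)/2) with (s/2 + /2) by field. rewrite Rpower_plus, Rpower_sqrt by lra.
  assert (0 < Rpower b (s/2)) by (unfold Rpower; apply exp_pos).
  assert (sqrt b <= 2 * Rabs (IZR k)).
  { assert (1 <= Rabs (IZR k)). { rewrite <- abs_IZR. apply IZR_le. lia. }
    rewrite <- (sqrt_pow2 (2 * Rabs (IZR k))) by lra. apply sqrt_le_1_alt.
    unfold b. rewrite <- (pow2_abs (IZR k)). nra. }
  nra. Qed.

Lemma abs_div_le num den D E : den <> 0 -> Rabs num * D <= E * Rabs den -> Rabs (num / den) * D <= E.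
Proof. intros Hd H. unfold Rdiv. rewrite Rabs_mult, Rabs_inv.
  assert (0 < Rabs den) by (apply Rabs_pos_lt; auto).
  apply (Rmult_le_reg_r (Rabs den)); auto.
  replace (Rabs num * / Rabs den * D * Rabs den) with (Rabs num * D) by (field; lra). exact H. Qed.

Lemma IZR_ne0 z : z <> 0%Z -> IZR z <> 0.
Proof. intros H. apply not_0_IZR. exact H. Qed.

Lemma absZ_ge1 z : z <> 0%Z -> 1 <= Rabs (IZR z).
Proof. intros. rewrite <- abs_IZR. apply IZR_le. lia. Qed.

Lemma mult1 n n1 : n1 <> 0%Z -> (n - n1)%Z <> 0%Z -> n <> 0%Z ->
  Rabs (IZR (n * (n1 ^ 2 + (n - n1) ^ 2)) / IZR (Phi2 n1 (n - n1))) *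
    (Rabs (IZR n1) * Rabs (IZR (n - n1))) <= 1.
Proof. intros H1 H2 H0. set (n2 := (n - n1)%Z) in *.
  assert (E1 : (n * (n1 ^ 2 + n2 ^ 2) = (n1 + n2) * (n1 * n1 + n2 * n2))%Z) by (unfold n2; ring).
  assert (E2 : (Phi2 n1 n2 = 5 * n1 * n2 * (n1 + n2) * (n1 * n1 + n1 * n2 + n2 * n2))%Z) by (unfold Phi2; ring).
  assert (E3 : (n1 + n2 = n)%Z) by (unfold n2; ring).
  rewrite E1, E2, E3. repeat rewrite ?mult_IZR, ?plus_IZR.
  pose proof (IZR_ne0 _ H1). pose proof (IZR_ne0 _ H2). pose proof (IZR_ne0 _ H0).
  set (x := IZR n1) in *. set (y := IZR n2) in *. set (w := IZR n) in *.
  assert (HQ : 0 < x * x + x * y + y * y).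
  { assert (0 < x * x) by (apply Rsqr_pos_lt; auto). pose proof (Rle_0_sqr (x + y)). pose proof (Rle_0_sqr y). unfold Rsqr in *. nra. }
  apply abs_div_le.
  { repeat apply Rmult_integral_contrapositive_currified; first [assumption | (apply Rgt_not_eq; lra)]. }
  rewrite !Rabs_mult. rewrite (Rabs_pos_eq (x * x + y * y)) by (pose proof (Rle_0_sqr x); pose proof (Rle_0_sqr y); unfold Rsqr in *; lra). rewrite (Rabs_pos_eq (x*x+x*y+y*y)) by lra.
  rewrite (Rabs_pos_eq 5) by lra.
  assert (0 <= Rabs w * (Rabs x * Rabs y)) by (pose proof (Rabs_pos w); pose proof (Rabs_pos x); pose proof (Rabs_pos y); apply Rmult_le_pos; [lra| apply Rmult_le_pos; lra]).
  assert (x * x + y * y <= 5 * (x * x + x * y + y * y)).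
  { pose proof (Rle_0_sqr (x + y)). pose proof (Rle_0_sqr x). pose proof (Rle_0_sqr y). unfold Rsqr in *. nra. }
  replace (Rabs w * (x * x + y * y) * (Rabs x * Rabs y)) with ((Rabs w * (Rabs x * Rabs y)) * (x * x + y * y)) by ring.
  replace (1 * (5 * Rabs x * Rabs y * Rabs w * (x * x + x * y + y * y))) with ((Rabs w * (Rabs x * Rabs y)) * (5 * (x * x + x * y + y * y))) by ring.
  apply Rmult_le_compat_l; auto. Qed.

Lemma mult2 c0 n n1 n2 : 0 < c0 ->
  let n3 := (n - n1 - n2)%Z in let m := (n2 + n3)%Z in
  n1 <> 0%Z -> n2 <> 0%Z -> n3 <> 0%Z -> m <> 0%Z -> n <> 0%Z ->
  c0 * IZR (Z.max (Z.abs n1) (Z.max (Z.abs n2) (Z.abs n3))) ^ 4 <= IZR (Z.abs (Phi3 n1 n2 n3)) ->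
  Rabs (IZR (n * (n1 ^ 2 + m ^ 2) * m * (n2 ^ 2 + n3 ^ 2)) / (IZR (Phi2 n1 m) * IZR (Phi3 n1 n2 n3))) *
    (Rabs (IZR n1) * Rabs (IZR n2) * Rabs (IZR n3)) <= / c0.
Proof. intros Hc n3 m H1 H2 H3 Hm H0 HP.
  set (Mx := Z.max (Z.abs n1) (Z.max (Z.abs n2) (Z.abs n3))) in *.
  assert (B1 : Rabs (IZR n1) <= IZR Mx) by (rewrite <- abs_IZR; apply IZR_le; unfold Mx; lia).
  assert (B2 : Rabs (IZR n2) <= IZR Mx) by (rewrite <- abs_IZR; apply IZR_le; unfold Mx; lia).
  assert (B3 : Rabs (IZR n3) <= IZR Mx) by (rewrite <- abs_IZR; apply IZR_le; unfold Mx; lia).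
  rewrite abs_IZR in HP.
  set (P := IZR (Phi3 n1 n2 n3)) in *. set (X := IZR Mx) in *.
  assert (E1 : (n * (n1 ^ 2 + m ^ 2) * m * (n2 ^ 2 + n3 ^ 2) = (n1 + m) * (n1 * n1 + m * m) * m * (n2 * n2 + n3 * n3))%Z) by (unfold m, n3; ring).
  assert (E2 : (Phi2 n1 m = 5 * n1 * m * (n1 + m) * (n1 * n1 + n1 * m + m * m))%Z) by (unfold Phi2; ring).
  assert (E3 : (n1 + m = n)%Z) by (unfold m, n3; ring).
  rewrite E1, E2, E3. repeat rewrite ?mult_IZR, ?plus_IZR.
  pose proof (IZR_ne0 _ H1). pose proof (IZR_ne0 _ H2). pose proof (IZR_ne0 _ H3).
  pose proof (IZR_ne0 _ Hm). pose proof (IZR_ne0 _ H0).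
  set (x := IZR n1) in *. set (y := IZR n2) in *. set (z := IZR n3) in *. set (v := IZR m) in *. set (w := IZR n) in *.
  assert (HX1 : 1 <= X) by (pose proof (absZ_ge1 _ H1); fold x in H8; lra).
  assert (HQ : 0 < x * x + x * v + v * v).
  { assert (0 < x * x) by (apply Rsqr_pos_lt; auto). pose proof (Rle_0_sqr (x + v)). pose proof (Rle_0_sqr v). unfold Rsqr in *. nra. }
  assert (HX4 : 1 <= X ^ 4). { pose proof (pow_R1_Rle X 4 HX1). lra. }
  assert (HPpos : 0 < Rabs P) by nra.
  assert (HP0 : P <> 0). { intros E. rewrite E, Rabs_R0 in HPpos. lra. }
  apply abs_div_le.
  { apply Rmult_integral_contrapositive_currified; auto.
    repeat apply Rmult_integral_contrapositive_currified; first [assumption | (apply Rgt_not_eq; lra)]. }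
  assert (Sxv : 0 <= x * x + v * v) by (pose proof (Rle_0_sqr x); pose proof (Rle_0_sqr v); unfold Rsqr in *; lra).
  assert (Syz : 0 <= y * y + z * z) by (pose proof (Rle_0_sqr y); pose proof (Rle_0_sqr z); unfold Rsqr in *; lra).
  rewrite !Rabs_mult. rewrite (Rabs_pos_eq (x * x + v * v)) by lra. rewrite (Rabs_pos_eq (x*x+x*v+v*v)) by lra.
  rewrite (Rabs_pos_eq (y * y + z * z)) by lra. rewrite (Rabs_pos_eq 5) by lra.
  pose proof (Rabs_pos w). pose proof (Rabs_pos v). pose proof (Rabs_pos x). pose proof (Rabs_pos y). pose proof (Rabs_pos z).
  set (R0 := Rabs w * Rabs v * Rabs x).
  assert (HR0 : 0 <= R0) by (unfold R0; apply Rmult_le_pos; [apply Rmult_le_pos|]; lra).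
  replace (Rabs w * (x * x + v * v) * Rabs v * (y * y + z * z) * (Rabs x * Rabs y * Rabs z))
    with (R0 * ((x * x + v * v) * ((y * y + z * z) * (Rabs y * Rabs z)))) by (unfold R0; ring).
  replace (/ c0 * (5 * Rabs x * Rabs v * Rabs w * (x * x + x * v + v * v) * Rabs P))
    with (R0 * (5 * (x * x + x * v + v * v) * (Rabs P / c0))) by (unfold R0; field; lra).
  apply Rmult_le_compat_l; auto.
  assert (HyzX : (y * y + z * z) * (Rabs y * Rabs z) <= 2 * X ^ 4).
  { replace (y * y) with (Rabs y * Rabs y) by (rewrite <- Rabs_mult, Rabs_pos_eq; [ring| apply Rle_0_sqr]).
    replace (z * z) with (Rabs z * Rabs z) by (rewrite <- Rabs_mult, Rabs_pos_eq; [ring| apply Rle_0_sqr]).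
    assert (Rabs y * Rabs y <= X * X) by nra. assert (Rabs z * Rabs z <= X * X) by nra.
    assert (Rabs y * Rabs z <= X * X) by nra.
    assert (0 <= Rabs y * Rabs z) by nra.
    replace (X ^ 4) with ((X * X) * (X * X)) by ring. nra. }
  assert (HPc : X ^ 4 <= Rabs P / c0).
  { apply (Rmult_le_reg_l c0); auto. replace (c0 * (Rabs P / c0)) with (Rabs P) by (field; lra). lra. }
  assert (x * x + v * v <= 2 * (x * x + x * v + v * v)).
  { pose proof (Rle_0_sqr (x + v)). unfold Rsqr in *. nra. }
  assert (0 <= X ^ 4) by lra.
  assert ((x * x + v * v) * ((y * y + z * z) * (Rabs y * Rabs z)) <= (x * x + v * v) * (2 * X ^ 4)) by (apply Rmult_le_compat_l; auto).
  assert ((x * x + v * v) * (2 * X ^ 4) <= (2 * (x * x + x * v + v * v)) * (2 * X ^ 4)) by (apply Rmult_le_compat_r; lra).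
  assert ((2 * (x * x + x * v + v * v)) * (2 * X ^ 4) <= (2 * (x * x + x * v + v * v)) * (2 * (Rabs P / c0))) by (apply Rmult_le_compat_l; lra).
  assert (0 <= (x * x + x * v + v * v) * (Rabs P / c0)) by (apply Rmult_le_pos; lra).
  lra. Qed.

Lemma Zneqb_true a b : Zneqb a b = true -> a <> b.
Proof. unfold Zneqb. intros H. apply negb_true_iff in H. apply Z.eqb_neq. exact H. Qed.

Definition Ff s (a : coeffs) k := wt s k * Cmod (a k).
Definition Gf (a : coeffs) k := Cmod (a k) / Rabs (IZR k).

Lemma Ff_nonneg s a k : 0 <= Ff s a k.
Proof. unfold Ff. apply Rmult_le_pos. left; apply wt_pos. apply Cmod_ge_0. Qed.
Lemma Gf_nonneg a k : 0 <= Gf a k.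
Proof. unfold Gf, Rdiv. apply Rmult_le_pos. apply Cmod_ge_0.
  destruct (Rle_lt_or_eq_dec 0 (Rabs (IZR k)) (Rabs_pos _)) as [h|h].
  left; apply Rinv_0_lt_compat; auto. rewrite <- h, Rinv_0. lra. Qed.

Lemma Gf_eq a k : k <> 0%Z -> Cmod (a k) = Gf a k * Rabs (IZR k).
Proof. intros Hk. unfold Gf. pose proof (absZ_ge1 _ Hk). field. lra. Qed.

Lemma Cmod_term3 c x y : Cmod (RtoC c * x * y) = Rabs c * Cmod x * Cmod y.
Proof. rewrite !Cmod_mult, Cmod_R. reflexivity. Qed.

Lemma B1_point s sig a n n1 : 0 <= s -> 0 <= sig <= s + 1 ->
  wt sig n * Cmod (B1_term a n n1) <=
  2 * Rpower 9 (sig/2) * (Ff s a n1 * Gf a (n - n1) + Ff s a (n - n1) * Gf a n1).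
Proof. intros Hs Hsig.
  assert (0 <= Rpower 9 (sig/2)) by (unfold Rpower; left; apply exp_pos).
  assert (HR : 0 <= 2 * Rpower 9 (sig/2) * (Ff s a n1 * Gf a (n - n1) + Ff s a (n - n1) * Gf a n1)).
  { pose proof (Ff_nonneg s a n1). pose proof (Ff_nonneg s a (n - n1)).
    pose proof (Gf_nonneg a n1). pose proof (Gf_nonneg a (n - n1)).
    apply Rmult_le_pos. lra. apply Rplus_le_le_0_compat; apply Rmult_le_pos; auto. }
  unfold B1_term. cbv zeta.
  destruct (Zneqb n1 0 && Zneqb (n - n1) 0 && Zneqb n1 n && Zneqb (n - n1) n) eqn:Hc.
  2:{ rewrite Cmod_0, Rmult_0_r. exact HR. }
  apply andb_prop in Hc as [Hc _]. apply andb_prop in Hc as [Hc _]. apply andb_prop in Hc as [H1 H2].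
  apply Zneqb_true in H1. apply Zneqb_true in H2.
  rewrite Cmod_term3.
  set (c := IZR (n * (n1 ^ 2 + (n - n1) ^ 2)) / IZR (Phi2 n1 (n - n1))).
  destruct (Z.eq_dec n 0) as [->|Hn].
  { replace c with 0. rewrite Rabs_R0. rewrite Rmult_0_l, Rmult_0_l, Rmult_0_r. exact HR.
    unfold c. rewrite Z.mul_0_l. unfold Rdiv. rewrite Rmult_0_l. reflexivity. }
  pose proof (mult1 n n1 H1 H2 Hn) as Hm. fold c in Hm.
  rewrite (Gf_eq a n1 H1), (Gf_eq a (n - n1) H2).
  unfold Ff. rewrite (Gf_eq a n1 H1), (Gf_eq a (n - n1) H2).
  set (g1 := Gf a n1). set (g2 := Gf a (n - n1)).
  set (x := Rabs (IZR n1)). set (y := Rabs (IZR (n - n1))).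
  assert (0 <= g1) by apply Gf_nonneg. assert (0 <= g2) by apply Gf_nonneg.
  assert (Hw := wt_sub2 sig n1 (n - n1) ltac:(lra)). replace (n1 + (n - n1))%Z with n in Hw by ring.
  assert (Hd1 := wt_div sig s n1 Hsig H1). assert (Hd2 := wt_div sig s (n - n1) Hsig H2).
  fold x in Hd1. fold y in Hd2. fold x y in Hm.
  pose proof (wt_pos sig n).
  assert (0 <= x) by apply Rabs_pos. assert (0 <= y) by apply Rabs_pos.
  set (C1 := Rpower 9 (sig/2)) in *.
  set (p := wt sig n) in *.
  assert (0 <= Rabs c) by apply Rabs_pos.
  assert (S1 : p * (Rabs c * (g1 * x) * (g2 * y)) <= p * (g1 * g2)).
  { replace (p * (Rabs c * (g1 * x) * (g2 * y))) with ((p * (g1 * g2)) * (Rabs c * (x * y))) by ring.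
    assert (0 <= p * (g1 * g2)) by (apply Rmult_le_pos; [lra | apply Rmult_le_pos; auto]).
    replace (p * (g1 * g2)) with ((p * (g1 * g2)) * 1) at 2 by ring.
    apply Rmult_le_compat_l; auto. }
  assert (S2 : p * (g1 * g2) <= C1 * (wt sig n1 + wt sig (n - n1)) * (g1 * g2)).
  { apply Rmult_le_compat_r; auto. apply Rmult_le_pos; auto. }
  assert (S3 : C1 * (wt sig n1 + wt sig (n - n1)) * (g1 * g2) <= C1 * (2 * x * wt s n1 + 2 * y * wt s (n - n1)) * (g1 * g2)).
  { apply Rmult_le_compat_r. apply Rmult_le_pos; auto. apply Rmult_le_compat_l; auto. lra. }
  eapply Rle_trans. 2: eapply Rle_trans. 3: apply Req_le. 
  apply S1. apply (Rle_trans _ _ _ S2 S3). ring. Qed.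


Lemma Cmod_term4 c x y z : Cmod (RtoC c * x * y * z) = Rabs c * Cmod x * Cmod y * Cmod z.
Proof. rewrite !Cmod_mult, Cmod_R. reflexivity. Qed.

Lemma B2_point s sig c0 a n n1 n2 : 0 <= s -> 0 <= sig <= s + 1 -> 0 < c0 ->
  wt sig n * Cmod (B2_term c0 a n n1 n2) <=
  (2 * Rpower 9 (sig/2) / c0) * (Ff s a n1 * (Gf a n2 * Gf a (n - n1 - n2)) +
     Ff s a n2 * (Gf a n1 * Gf a (n - n1 - n2)) + Ff s a (n - n1 - n2) * (Gf a n1 * Gf a n2)).
Proof. intros Hs Hsig Hc0.
  assert (0 <= Rpower 9 (sig/2)) by (unfold Rpower; left; apply exp_pos).
  set (n3 := (n - n1 - n2)%Z).
  pose proof (Ff_nonneg s a n1). pose proof (Ff_nonneg s a n2). pose proof (Ff_nonneg s a n3).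
  pose proof (Gf_nonneg a n1). pose proof (Gf_nonneg a n2). pose proof (Gf_nonneg a n3).
  assert (0 <= 2 * Rpower 9 (sig/2) / c0).
  { unfold Rdiv. apply Rmult_le_pos. lra. left; apply Rinv_0_lt_compat; auto. }
  assert (HR : 0 <= (2 * Rpower 9 (sig/2) / c0) * (Ff s a n1 * (Gf a n2 * Gf a n3) +
     Ff s a n2 * (Gf a n1 * Gf a n3) + Ff s a n3 * (Gf a n1 * Gf a n2))).
  { apply Rmult_le_pos. auto. 
    repeat apply Rplus_le_le_0_compat; (apply Rmult_le_pos; [auto | apply Rmult_le_pos; auto]). }
  unfold B2_term. cbv zeta. fold n3.
  set (Mx := Z.max (Z.abs n1) (Z.max (Z.abs n2) (Z.abs n3))).
  destruct (Zneqb n1 0 && Zneqb n2 0 && Zneqb n3 0 && Zneqb n1 n && Zneqb n2 n && Zneqb n3 n &&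
      Zneqb (n2 + n3) 0 && (if Rle_dec (c0 * IZR Mx ^ 4) (IZR (Z.abs (Phi3 n1 n2 n3))) then true else false)) eqn:Hc.
  2:{ rewrite Cmod_0, Rmult_0_r. exact HR. }
  apply andb_prop in Hc as [Hc Hle].
  destruct (Rle_dec _ _) as [Hle'|]; [clear Hle|discriminate].
  apply andb_prop in Hc as [Hc Hm].
  apply andb_prop in Hc as [Hc _]. apply andb_prop in Hc as [Hc _]. apply andb_prop in Hc as [Hc _].
  apply andb_prop in Hc as [Hc K3]. apply andb_prop in Hc as [K1 K2].
  apply Zneqb_true in K1. apply Zneqb_true in K2. apply Zneqb_true in K3. apply Zneqb_true in Hm.
  rewrite Cmod_term4.
  set (c := IZR (n * (n1 ^ 2 + (n2 + n3) ^ 2) * (n2 + n3) * (n2 ^ 2 + n3 ^ 2)) / (IZR (Phi2 n1 (n2 + n3)) * IZR (Phi3 n1 n2 n3))).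
  destruct (Z.eq_dec n 0) as [Hn0|Hn].
  { replace c with 0. rewrite Rabs_R0. rewrite !Rmult_0_l, Rmult_0_r. exact HR.
    unfold c. rewrite Hn0, !Z.mul_0_l. unfold Rdiv. rewrite Rmult_0_l. reflexivity. }
  pose proof (mult2 c0 n n1 n2 Hc0) as Hm2. cbv zeta in Hm2. fold n3 in Hm2.
  specialize (Hm2 K1 K2 K3 Hm Hn Hle'). fold c in Hm2.
  unfold Ff. rewrite (Gf_eq a n1 K1), (Gf_eq a n2 K2), (Gf_eq a n3 K3).
  set (g1 := Gf a n1) in *. set (g2 := Gf a n2) in *. set (g3 := Gf a n3) in *.
  set (x := Rabs (IZR n1)) in *. set (y := Rabs (IZR n2)) in *. set (z := Rabs (IZR n3)) in *.
  assert (Hw := wt_sub3 sig n1 n2 n3 ltac:(lra)). replace (n1 + n2 + n3)%Z with n in Hw by (unfold n3; ring).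
  assert (Hd1 := wt_div sig s n1 Hsig K1). assert (Hd2 := wt_div sig s n2 Hsig K2).
  assert (Hd3 := wt_div sig s n3 Hsig K3).
  fold x in Hd1. fold y in Hd2. fold z in Hd3.
  pose proof (wt_pos sig n).
  assert (0 <= x) by apply Rabs_pos. assert (0 <= y) by apply Rabs_pos. assert (0 <= z) by apply Rabs_pos.
  set (C1 := Rpower 9 (sig/2)) in *.
  set (p := wt sig n) in *.
  assert (0 <= Rabs c) by apply Rabs_pos.
  assert (Hg : 0 <= g1 * g2 * g3) by (apply Rmult_le_pos; [apply Rmult_le_pos|]; auto).
  assert (S1 : p * (Rabs c * (g1 * x) * (g2 * y) * (g3 * z)) <= p * (g1 * g2 * g3) * / c0).
  { replace (p * (Rabs c * (g1 * x) * (g2 * y) * (g3 * z))) with ((p * (g1 * g2 * g3)) * (Rabs c * (x * y * z))) by ring.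
    assert (0 <= p * (g1 * g2 * g3)) by (apply Rmult_le_pos; lra).
    apply Rmult_le_compat_l; auto. }
  assert (S2 : p * (g1 * g2 * g3) * / c0 <= C1 * (2 * x * wt s n1 + 2 * y * wt s n2 + 2 * z * wt s n3) * (g1 * g2 * g3) * / c0).
  { apply Rmult_le_compat_r. left; apply Rinv_0_lt_compat; auto.
    apply Rmult_le_compat_r; auto. eapply Rle_trans. apply Hw. apply Rmult_le_compat_l; auto. lra. }
  eapply Rle_trans. apply S1. eapply Rle_trans. apply S2. apply Req_le. field. lra. Qed.

Lemma inv_sq_sum N : zsumR N (fun k => / (IZR k ^ 2)) <= 4 - 4 / (INR N + 1).
Proof. induction N.
  - unfold zsumR, zrange. simpl. rewrite Rmult_0_l, Rinv_0. lra.
  - rewrite zsumR_S. rewrite opp_IZR, <- INR_IZR_INZ.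
    replace ((- INR (S N)) ^ 2) with (INR (S N) ^ 2) by ring.
    rewrite S_INR in *. set (t := INR N + 1) in *.
    assert (1 <= t) by (unfold t; pose proof (pos_INR N); lra).
    assert (/ (t ^ 2) + / (t ^ 2) <= 4 / t - 4 / (t + 1)).
    { replace (/ (t ^ 2) + / (t ^ 2)) with (2 / t ^ 2) by (field; lra).
      replace (4 / t - 4 / (t + 1)) with (4 / (t * (t + 1))) by (field; lra).
      apply Rmult_le_reg_r with (t ^ 2 * (t + 1)). nra.
      replace (2 / t ^ 2 * (t ^ 2 * (t + 1))) with (2 * (t + 1)) by (field; lra).
      replace (4 / (t * (t + 1)) * (t ^ 2 * (t + 1))) with (4 * t) by (field; lra). lra. }
    lra. Qed.

Section Win.
Variables (s M : R) (a : coeffs).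
Hypothesis Hs : 0 <= s.
Hypothesis HM : 0 <= M.
Hypothesis HB : forall N, zsumR N (fun n => Rpower (1 + IZR n ^ 2) s * Cmod (a n) ^ 2) <= M ^ 2.

Lemma F_win : forall l, NoDup l -> lsum l (fun k => Ff s a k ^ 2) <= M ^ 2.
Proof. intros l Hl. apply lsum_nodup_bound; auto. intros; apply pow2_ge_0.
  intros N. unfold zsumR. fold (lsum (zrange N) (fun k => Ff s a k ^ 2)).
  rewrite (lsum_ext _ _ (fun n => Rpower (1 + IZR n ^ 2) s * Cmod (a n) ^ 2)). apply HB.
  intros k _. unfold Ff. rewrite Rpow_mult_distr, wt_sq. reflexivity. Qed.

Definition hf k := / (wt s k * Rabs (IZR k)).

Lemma G_eq k : Gf a k = Ff s a k * hf k.
Proof. unfold Gf, Ff, hf. destruct (Z.eq_dec k 0) as [->|Hk].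
  - rewrite Rabs_R0, Rmult_0_r, Rinv_0. unfold Rdiv. rewrite Rinv_0. ring.
  - pose proof (absZ_ge1 _ Hk). pose proof (wt_pos s k). field. lra. Qed.

Lemma hf_sq k : hf k ^ 2 <= / (IZR k ^ 2).
Proof. unfold hf. destruct (Z.eq_dec k 0) as [->|Hk].
  - rewrite Rabs_R0, Rmult_0_r, Rinv_0. simpl. rewrite Rmult_0_l, Rinv_0. lra.
  - pose proof (absZ_ge1 _ Hk). pose proof (wt_ge1 s k Hs).
    rewrite <- (pow2_abs (IZR k)). set (x := Rabs (IZR k)) in *. set (w := wt s k) in *.
    rewrite pow_inv. apply Rinv_le_contravar. nra.
    rewrite Rpow_mult_distr. assert (1 <= w ^ 2) by nra. assert (0 <= x^2) by apply pow2_ge_0. nra. Qed.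

Lemma G_win : forall l, NoDup l -> lsum l (Gf a) <= 2 * M.
Proof. intros l Hl. apply lsum_nodup_bound; auto. intros; apply Gf_nonneg.
  intros N. unfold zsumR. fold (lsum (zrange N) (Gf a)).
  rewrite (lsum_ext _ _ (fun k => Ff s a k * hf k)) by (intros; apply G_eq).
  pose proof (lsum_CS (zrange N) (Ff s a) hf) as H.
  assert (H1 : lsum (zrange N) (fun k => Ff s a k ^ 2) <= M ^ 2) by (apply F_win, zrange_NoDup).
  assert (H2 : lsum (zrange N) (fun k => hf k ^ 2) <= 4).
  { eapply Rle_trans. apply lsum_le. intros; apply hf_sq. eapply Rle_trans. apply inv_sq_sum.
    assert (0 < INR N + 1) by (pose proof (pos_INR N); lra).
    assert (0 <= 4 / (INR N + 1)) by (unfold Rdiv; apply Rmult_le_pos; [lra| left; apply Rinv_0_lt_compat; lra]). lra. }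
  assert (0 <= lsum (zrange N) (fun k => Ff s a k ^ 2)) by (apply lsum_nonneg; intros; apply pow2_ge_0).
  assert (0 <= lsum (zrange N) (fun k => hf k ^ 2)) by (apply lsum_nonneg; intros; apply pow2_ge_0).
  assert (0 <= lsum (zrange N) (fun k => Ff s a k * hf k)).
  { rewrite <- (lsum_ext _ (Gf a)) by (intros; apply G_eq). apply lsum_nonneg; intros; apply Gf_nonneg. }
  assert ((lsum (zrange N) (fun k => Ff s a k * hf k)) ^ 2 <= (2 * M) ^ 2).
  { eapply Rle_trans. apply H. replace ((2 * M)^2) with (M^2 * 4) by ring.
    apply Rmult_le_compat; auto. }
  nra. Qed.
End Win.

Lemma Cmod_fold (l : list Z) (f : Z -> C) :
  Cmod (fold_right Cplus (RtoC 0) (map f l)) <= lsum l (fun k => Cmod (f k)).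
Proof. induction l as [|x l IH]; simpl.
  - rewrite lsum_nil. rewrite Cmod_0. lra.
  - rewrite lsum_cons. eapply Rle_trans. apply Cmod_triangle. lra. Qed.

Lemma Cmod_zsumC L f : Cmod (zsumC L f) <= lsum (zrange L) (fun k => Cmod (f k)).
Proof. apply Cmod_fold. Qed.

Lemma sq_le x y : 0 <= x -> x <= y -> x ^ 2 <= y ^ 2.
Proof. intros. apply pow_incr; auto. Qed.
Lemma sum2_sq x y : (x + y) ^ 2 <= 2 * (x ^ 2 + y ^ 2).
Proof. pose proof (pow2_ge_0 (x - y)). nra. Qed.
Lemma sum3_sq x y z : (x + y + z) ^ 2 <= 3 * (x ^ 2 + y ^ 2 + z ^ 2).
Proof. pose proof (pow2_ge_0 (x - y)). pose proof (pow2_ge_0 (x - z)). pose proof (pow2_ge_0 (y - z)). nra. Qed.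

Section Main.
Variables (s sig c0 M : R) (a : coeffs).
Hypothesis Hs : 0 <= s.
Hypothesis Hsig : 0 <= sig <= s + 1.
Hypothesis Hc0 : 0 < c0.
Hypothesis HM : 0 <= M.
Hypothesis HB : forall N, zsumR N (fun n => Rpower (1 + IZR n ^ 2) s * Cmod (a n) ^ 2) <= M ^ 2.

Let C1 := Rpower 9 (sig / 2).
Lemma C1_pos : 0 <= C1.
Proof. unfold C1, Rpower. left; apply exp_pos. Qed.

Definition T1 n L := lsum (zrange L) (fun n1 => Cmod (B1_term a n n1)).

Lemma T1_bound N L : lsum (zrange N) (fun n => wt sig n ^ 2 * T1 n L ^ 2) <= 8 * C1 ^ 2 * (2 * ((2 * M) * (M ^ 2 * (2 * M)))).
Proof.
  set (S1 := fun n => lsum (zrange L) (fun n1 => Ff s a n1 * Gf a (n - n1)%Z)).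
  set (S2 := fun n => lsum (zrange L) (fun n1 => Ff s a (n - n1)%Z * Gf a n1)).
  assert (Hp : forall n, wt sig n ^ 2 * T1 n L ^ 2 <= 8 * C1 ^ 2 * (S1 n ^ 2 + S2 n ^ 2)).
  { intros n. rewrite <- Rpow_mult_distr.
    assert (H0 : 0 <= wt sig n * T1 n L).
    { apply Rmult_le_pos. left; apply wt_pos. apply lsum_nonneg. intros; apply Cmod_ge_0. }
    assert (H1 : wt sig n * T1 n L <= 2 * C1 * (S1 n + S2 n)).
    { unfold T1. rewrite <- lsum_scal. unfold S1, S2. rewrite <- lsum_plus, <- lsum_scal.
      apply lsum_le. intros n1 _. eapply Rle_trans. apply (B1_point s sig a n n1 Hs Hsig).
      fold C1. apply Req_le. ring. }
    eapply Rle_trans. apply sq_le; eauto.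
    pose proof (sum2_sq (S1 n) (S2 n)).
    replace ((2 * C1 * (S1 n + S2 n)) ^ 2) with (4 * C1 ^ 2 * (S1 n + S2 n) ^ 2) by ring.
    pose proof (pow2_ge_0 C1). nra. }
  eapply Rle_trans. apply lsum_le. intros n _. apply Hp.
  rewrite lsum_scal. apply Rmult_le_compat_l. pose proof (pow2_ge_0 C1). lra.
  rewrite lsum_plus.
  assert (HF0 := Ff_nonneg s a). assert (HG0 := Gf_nonneg a).
  assert (HFw := F_win s M a HB). assert (HGw := G_win s M a Hs HM HB).
  pose proof (bil1 _ _ _ _ HG0 HFw HGw N L).
  pose proof (bil2 _ _ _ _ HG0 HFw HGw N L).
  unfold S1, S2. lra. Qed.

Definition T2 n L := lsum (zrange L) (fun n1 => lsum (zrange L) (fun n2 => Cmod (B2_term c0 a n n1 n2))).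

Lemma T2_bound N L : lsum (zrange N) (fun n => wt sig n ^ 2 * T2 n L ^ 2) <=
  12 * (C1 / c0) ^ 2 * (3 * (M ^ 2 * (2 * M) ^ 4)).
Proof.
  set (S1 := fun n => lsum (sq L) (fun p => Ff s a (fst p) * (Gf a (snd p) * Gf a (n - fst p - snd p)%Z))).
  set (S2 := fun n => lsum (sq L) (fun p => Ff s a (snd p) * (Gf a (fst p) * Gf a (n - fst p - snd p)%Z))).
  set (S3 := fun n => lsum (sq L) (fun p => Ff s a (n - fst p - snd p)%Z * (Gf a (fst p) * Gf a (snd p)))).
  assert (Hp : forall n, wt sig n ^ 2 * T2 n L ^ 2 <= 12 * (C1 / c0) ^ 2 * (S1 n ^ 2 + S2 n ^ 2 + S3 n ^ 2)).
  { intros n. rewrite <- Rpow_mult_distr.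
    assert (H0 : 0 <= wt sig n * T2 n L).
    { apply Rmult_le_pos. left; apply wt_pos. apply lsum_nonneg. intros; apply lsum_nonneg; intros; apply Cmod_ge_0. }
    assert (H1 : wt sig n * T2 n L <= 2 * (C1 / c0) * (S1 n + S2 n + S3 n)).
    { unfold T2. rewrite <- lsum_prod with (h := fun p => Cmod (B2_term c0 a n (fst p) (snd p))).
      rewrite <- lsum_scal. unfold S1, S2, S3. rewrite <- !lsum_plus, <- lsum_scal.
      apply lsum_le. intros p _. eapply Rle_trans. apply (B2_point s sig c0 a n (fst p) (snd p) Hs Hsig Hc0).
      fold C1. apply Req_le. unfold Rdiv. ring. }
    eapply Rle_trans. apply sq_le; eauto.
    pose proof (sum3_sq (S1 n) (S2 n) (S3 n)).
    replace ((2 * (C1 / c0) * (S1 n + S2 n + S3 n)) ^ 2) with (4 * (C1 / c0) ^ 2 * (S1 n + S2 n + S3 n) ^ 2) by ring.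
    pose proof (pow2_ge_0 (C1 / c0)). nra. }
  eapply Rle_trans. apply lsum_le. intros n _. apply Hp.
  rewrite lsum_scal. apply Rmult_le_compat_l. pose proof (pow2_ge_0 (C1 / c0)). lra.
  rewrite !lsum_plus.
  assert (HF0 := Ff_nonneg s a). assert (HG0 := Gf_nonneg a).
  assert (HFw := F_win s M a HB). assert (HGw := G_win s M a Hs HM HB).
  pose proof (tri1 _ _ _ _ HG0 HFw HGw N L).
  pose proof (tri2 _ _ _ _ HG0 HFw HGw N L).
  pose proof (tri3 _ _ _ _ HG0 HFw HGw N L).
  unfold S1, S2, S3.
  replace (3 * (M ^ 2 * (2 * M) ^ 4)) with ((2 * M * (2 * M)) * (2 * M * (M ^ 2 * (2 * M))) + (2 * M * (2 * M)) * (2 * M * (M ^ 2 * (2 * M))) + (2 * M * (2 * M)) * (M ^ 2 * (2 * M * (2 * M)))) by ring.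
  lra. Qed.

End Main.

Lemma T1_mono a n L : T1 a n L <= T1 a n (S L).
Proof. unfold T1. apply (zsumR_mono L (fun n1 => Cmod (B1_term a n n1))). intros; apply Cmod_ge_0. Qed.

Lemma T2_mono c0 a n L : T2 c0 a n L <= T2 c0 a n (S L).
Proof. unfold T2. eapply Rle_trans.
  - apply lsum_le. intros n1 _. apply (zsumR_mono L (fun n2 => Cmod (B2_term c0 a n n1 n2))). intros; apply Cmod_ge_0.
  - apply (zsumR_mono L (fun n1 => zsumR (S L) (fun n2 => Cmod (B2_term c0 a n n1 n2)))).
    intros; apply lsum_nonneg; intros; apply Cmod_ge_0. Qed.

Lemma T1_nonneg a n L : 0 <= T1 a n L.
Proof. apply lsum_nonneg; intros; apply Cmod_ge_0. Qed.
Lemma T2_nonneg c0 a n L : 0 <= T2 c0 a n L.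
Proof. apply lsum_nonneg; intros; apply lsum_nonneg; intros; apply Cmod_ge_0. Qed.

Lemma B1hat_bound a n X : (forall L, T1 a n L <= X) -> Cmod (B1hat a n) ^ 2 <= 2 * X ^ 2.
Proof. intros H. unfold B1hat. destruct (Z.eqb n 0).
  - rewrite Cmod_0. pose proof (pow2_ge_0 X). simpl. lra.
  - apply limC_bound. intros L. eapply Rle_trans. apply Cmod_zsumC. apply H. Qed.

Lemma B2hat_bound c0 a n X : (forall L, T2 c0 a n L <= X) -> Cmod (B2hat c0 a n) ^ 2 <= 2 * X ^ 2.
Proof. intros H. unfold B2hat. destruct (Z.eqb n 0).
  - rewrite Cmod_0. pose proof (pow2_ge_0 X). simpl. lra.
  - apply limC_bound. intros L. eapply Rle_trans. apply Cmod_zsumC. eapply Rle_trans. 2: apply H.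
    apply lsum_le. intros n1 _. apply Cmod_zsumC. Qed.

Lemma Cmod_plus_sq z1 z2 : Cmod (z1 + z2) ^ 2 <= 2 * Cmod z1 ^ 2 + 2 * Cmod z2 ^ 2.
Proof. pose proof (Cmod_triangle z1 z2). pose proof (Cmod_ge_0 (z1 + z2)).
  eapply Rle_trans. apply sq_le; eauto. pose proof (sum2_sq (Cmod z1) (Cmod z2)). lra. Qed.

Theorem lemma5p2 :
  forall (s eps c0 : R), 1 / 2 < s -> 0 <= eps < 1 -> 0 < c0 ->
  exists K : R, 0 < K /\
    forall (I : R -> Prop) (u : R -> coeffs) (M : R),
      (forall t, I t -> real_meanzero (u t)) ->
      continuous_Hs s I u ->
      0 <= M ->
      (forall t, I t -> Rbar_le (Hs_sq s (u t)) (Finite (M ^ 2))) ->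
      forall t, I t ->
        Rbar_le (Hs_sq (s + eps) (fun n => Cplus (B1hat (u t) n) (B2hat c0 (u t) n)))
                (Finite ((K * (M ^ 2 + M ^ 3)) ^ 2)).
Proof.
  intros s eps c0 Hs Heps Hc0.
  set (sig := s + eps).
  set (C1 := Rpower 9 (sig / 2)).
  assert (HC1 : 0 < C1) by (unfold C1, Rpower; apply exp_pos).
  set (D := C1 / c0).
  assert (HD : 0 < D) by (unfold D, Rdiv; apply Rmult_lt_0_compat; [lra| apply Rinv_0_lt_compat; lra]).
  exists (1 + 16 * C1 + 48 * D). split. lra.
  intros I u M _ _ HM HHs t It.
  set (a := u t).
  assert (HB := Hs_partial s a (M ^ 2) (HHs t It)).
  assert (Hs0 : 0 <= s) by lra. assert (Hsig : 0 <= sig <= s + 1) by (unfold sig; lra).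
  apply Hs_goal. intros N.
  assert (Hc : forall n, In n (zrange N) -> 1 <= wt sig n ^ 2).
  { intros n _. pose proof (wt_ge1 sig n ltac:(lra)). nra. }
  destruct (lim_pass (zrange N) (fun n => wt sig n ^ 2) (T1 a) _ Hc (T1_nonneg a) (T1_mono a)
     (T1_bound s sig M a Hs0 Hsig HM HB N)) as [X1 [HX1 HS1]].
  destruct (lim_pass (zrange N) (fun n => wt sig n ^ 2) (T2 c0 a) _ Hc (T2_nonneg c0 a) (T2_mono c0 a)
     (T2_bound s sig c0 M a Hs0 Hsig Hc0 HM HB N)) as [X2 [HX2 HS2]].
  fold C1 in HS1, HS2. fold D in HS2.
  unfold zsumR. fold (lsum (zrange N) (fun n => Rpower (1 + IZR n ^ 2) (s + eps) * Cmod (B1hat a n + B2hat c0 a n) ^ 2)).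
  eapply Rle_trans with (lsum (zrange N) (fun n => 4 * (wt sig n ^ 2 * X1 n ^ 2) + 4 * (wt sig n ^ 2 * X2 n ^ 2))).
  { apply lsum_le. intros n Hn. fold sig. rewrite <- wt_sq.
    pose proof (B1hat_bound a n (X1 n) (fun L => HX1 n L Hn)).
    pose proof (B2hat_bound c0 a n (X2 n) (fun L => HX2 n L Hn)).
    pose proof (Cmod_plus_sq (B1hat a n) (B2hat c0 a n)).
    pose proof (pow2_ge_0 (wt sig n)).
    assert (Cmod (B1hat a n + B2hat c0 a n) ^ 2 <= 4 * X1 n ^ 2 + 4 * X2 n ^ 2) by lra.
    replace (4 * (wt sig n ^ 2 * X1 n ^ 2) + 4 * (wt sig n ^ 2 * X2 n ^ 2)) with (wt sig n ^ 2 * (4 * X1 n ^ 2 + 4 * X2 n ^ 2)) by ring.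
    apply Rmult_le_compat_l; auto. }
  rewrite lsum_plus, !lsum_scal.
  set (K := 1 + 16 * C1 + 48 * D).
  assert (HK1 : (16 * C1) ^ 2 <= K ^ 2) by (apply sq_le; unfold K; lra).
  assert (HK2 : (48 * D) ^ 2 <= K ^ 2) by (apply sq_le; unfold K; lra).
  assert (HM4 : 0 <= M ^ 4) by (apply pow_le; lra).
  assert (HM5 : 0 <= M ^ 5) by (apply pow_le; lra).
  assert (HM6 : 0 <= M ^ 6) by (apply pow_le; lra).
  replace ((K * (M ^ 2 + M ^ 3)) ^ 2) with (K ^ 2 * M ^ 4 + K ^ 2 * M ^ 6 + 2 * K ^ 2 * M ^ 5) by ring.
  assert (0 <= 2 * K ^ 2 * M ^ 5) by (pose proof (pow2_ge_0 K); nra).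
  assert ((16 * C1) ^ 2 * M ^ 4 <= K ^ 2 * M ^ 4) by (apply Rmult_le_compat_r; auto).
  assert ((48 * D) ^ 2 * M ^ 6 <= K ^ 2 * M ^ 6) by (apply Rmult_le_compat_r; auto).
  replace (8 * C1 ^ 2 * (2 * (2 * M * (M ^ 2 * (2 * M))))) with ((16 * C1) ^ 2 * M ^ 4 / 4) in HS1 by field.
  replace (12 * D ^ 2 * (3 * (M ^ 2 * (2 * M) ^ 4))) with ((48 * D) ^ 2 * M ^ 6 / 4) in HS2 by field.
  lra. Qed.
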